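(* Let $F$ be an infinite field. The pairwise distinct commutators $[z_1,a_1y_1,\dots,a_ny_n,z_2,b_1y_1,\dots,b_ny_n]$, where $z_1,z_2$ are distinct variables of degree $1$, $y_1,\dots,y_n$ are distinct variables of degree $0$, $n\ge0$ and $a_i,b_i\ge0$, are linearly independent modulo the $T_{\mathbb{Z}_3}$-ideal $I$ of $\mathbb{Z}_3$-graded identities of $UT_3(F)^{(-)}$.
   Context: $UT_3(F)^{(-)}$: $3\times3$ upper triangular matrices with bracket $[a,b]=ab-ba$ and canonical $\mathbb{Z}_3$-grading (degree-$k$ component spanned by $e_{ij}$ with $j-i=k$). The free Lie algebra is generated by variables of degree $0$ ($y_i$), $1$ ($z_i$), $2$ ($w_i$). Commutators are left normed; $[z_1,a_1y_1,\dots,a_ny_n,z_2,b_1y_1,\dots,b_ny_n]$ denotes $z_1$ followed by $y_i$ repeated $a_i$ times ($i=1,\dots,n$), then $z_2$, then $y_i$ repeated $b_i$ times. *)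

(* Defs.v *)
From HB Require Import structures.
From mathcomp Require Import all_boot all_order all_algebra.
Set Implicit Arguments. Unset Strict Implicit. Unset Printing Implicit Defensive.
Import GRing.Theory.
Local Open Scope ring_scope.

Definition infinite_type (T : eqType) : Prop :=
  forall s : seq T, exists x : T, x \notin s.

(* UT_3(F)^(-): the Lie bracket [a,b] = ab - ba on 3x3 matrices
   (restricted below to homogeneous, hence upper triangular, matrices). *)
Definition lie (F : fieldType) (A B : 'M[F]_3) : 'M[F]_3 :=
  A *m B - B *m A.

(* Canonical Z_3-grading of UT_3(F): the degree-k component is spanned by
   the e_ij (indices 0..2) with j - i = k; A is homogeneous of degree k iff
   all its nonzero entries sit at positions (i,j) with i <= j and j - i = k. *)
Definition homog (F : fieldType) (k : nat) (A : 'M[F]_3) : Prop :=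
  forall i j : 'I_3, A i j != 0 -> ((i <= j)%N && (j - i == k)%N).

(* u followed by y_1 repeated a_1 times, ..., y_n repeated a_n times
   (left-normed). *)
Definition br_ys (F : fieldType) (n : nat) (y : 'I_n -> 'M[F]_3)
    (a : n.-tuple nat) (u : 'M[F]_3) : 'M[F]_3 :=
  foldl (fun acc i => iter (tnth a i) (fun v => lie v (y i)) acc) u (enum 'I_n).

(* Evaluation of [z1, a1 y1, ..., an yn, z2, b1 y1, ..., bn yn]
   at y_i := y i, z1, z2. *)
Definition comm_eval (F : fieldType) (n : nat) (y : 'I_n -> 'M[F]_3)
    (z1 z2 : 'M[F]_3) (ab : n.-tuple nat * n.-tuple nat) : 'M[F]_3 :=
  br_ys y ab.2 (lie (br_ys y ab.1 z1) z2).

(* Main.v *)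
Require Import Defs.
From mathcomp Require Import all_boot all_order all_algebra ring zify.
Import GRing.Theory.
Local Open Scope ring_scope.

Fixpoint enc (N : nat) (l : seq nat) : nat :=
  if l is d :: l' then (d + N * enc N l')%N else 0%N.

Lemma enc_inj {N l1 l2} : (0 < N)%N -> size l1 = size l2 -> all (fun d => d < N)%N l1 ->
  all (fun d => d < N)%N l2 -> enc N l1 = enc N l2 -> l1 = l2.
Proof.
move=> N0; elim: l1 l2 => [|d1 l1 IH] [|d2 l2] //= [Hs] /andP[h1 a1] /andP[h2 a2] He.
have Hd : d1 = d2.
  have := congr1 (fun x => x %% N)%N He => /=.
  by rewrite !(addnC _ (N * _)%N) !(mulnC N) !modnMDl !modn_small.
move: He; rewrite Hd => /addnI /eqP; rewrite eqn_pmul2l // => /eqP He.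
by rewrite (IH l2).
Qed.

Lemma enc_sum N l : enc N l = (\sum_(i < size l) nth 0 l i * N ^ i)%N.
Proof.
elim: l => [|d l IH] /=; first by rewrite big_ord0.
rewrite big_ord_recl /= expn0 muln1 IH big_distrr /=; congr (_ + _)%N.
by apply: eq_bigr => i _; rewrite /= expnS mulnCA.
Qed.

Lemma enc_cat N l1 l2 : enc N (l1 ++ l2) = (enc N l1 + N ^ size l1 * enc N l2)%N.
Proof.
elim: l1 => [|d l IH] /=; first by rewrite expn0 mul1n.
rewrite IH expnS; lia.
Qed.

Lemma infinite_seq (F : fieldType) : infinite_type F -> forall m, exists r : seq F, uniq r /\ size r = m.
Proof.
move=> HF; elim=> [|m [r [ur sr]]]; first by exists [::].
have [x hx] := HF r; exists (x :: r); by rewrite /= hx ur sr.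
Qed.
Section S.
Variable F : fieldType.
Definition o0 : 'I_3 := @Ordinal 3 0 isT.
Definition o1 : 'I_3 := @Ordinal 3 1 isT.
Definition o2 : 'I_3 := @Ordinal 3 2 isT.
Definition dg (x0 x1 x2 : F) : 'M[F]_3 :=
  \matrix_(i, j) (if i == j then (if val i == 0%N then x0 else if val i == 1%N then x1 else x2) else 0).
Lemma lie01 x0 x1 x2 k : lie (k *: delta_mx o0 o1) (dg x0 x1 x2) = (k * (x1 - x0)) *: delta_mx o0 o1.
Proof.
apply/matrixP=> i j; rewrite /lie !mxE !big_ord_recr !big_ord0 /= !mxE.
by case: i => [[|[|[|i]]] Hi]; case: j => [[|[|[|j]]] Hj] //=; ring.
Qed.
Lemma lie02 x0 x1 x2 k : lie (k *: delta_mx o0 o2) (dg x0 x1 x2) = (k * (x2 - x0)) *: delta_mx o0 o2.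
Proof.
apply/matrixP=> i j; rewrite /lie !mxE !big_ord_recr !big_ord0 /= !mxE.
by case: i => [[|[|[|i]]] Hi]; case: j => [[|[|[|j]]] Hj] //=; ring.
Qed.
Lemma lie0112 k : lie (k *: delta_mx o0 o1) (delta_mx o1 o2) = k *: delta_mx o0 o2 :> 'M[F]_3.
Proof.
apply/matrixP=> i j; rewrite /lie !mxE !big_ord_recr !big_ord0 /= !mxE.
by case: i => [[|[|[|i]]] Hi]; case: j => [[|[|[|j]]] Hj] //=; ring.
Qed.
End S.

Lemma iter_lie (F : fieldType) (E Y : 'M[F]_3) (d : F) m k :
  (forall k, lie (k *: E) Y = (k * d) *: E) ->
  iter m (fun v => lie v Y) (k *: E) = (k * d ^+ m) *: E.
Proof.
move=> H; elim: m => [|m IH] /=; first by rewrite expr0 mulr1.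
by rewrite IH H exprS -mulrA (mulrC d) .
Qed.

Lemma br_ys_E (F : fieldType) n (y : 'I_n -> 'M[F]_3) (E : 'M[F]_3) (d : 'I_n -> F)
  (a : n.-tuple nat) k :
  (forall i k, lie (k *: E) (y i) = (k * d i) *: E) ->
  br_ys y a (k *: E) = (k * \prod_(i < n) d i ^+ tnth a i) *: E.
Proof.
move=> H; rewrite /br_ys -big_enum; elim: (enum _) k => [|i L IH] k /=.
  by rewrite big_nil mulr1.
by rewrite (@iter_lie F E (y i) (d i) (tnth a i) k (H i)) IH big_cons mulrA.
Qed.

Lemma mem_le_sumn x l : x \in l -> (x <= sumn l)%N.
Proof.
elim: l => [|d l IH] //=; rewrite in_cons => /orP[/eqP->|/IH h]; first exact: leq_addr.
exact: (leq_trans h (leq_addl _ _)).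
Qed.

Lemma enc_tuple N n (a : n.-tuple nat) : enc N a = (\sum_(i < n) tnth a i * N ^ i)%N.
Proof.
rewrite (eq_bigr (fun i : 'I_n => nth 0 a i * N ^ i)%N); last by move=> i _; rewrite (tnth_nth 0).
rewrite -(big_mkord xpredT (fun i => nth 0 a i * N ^ i)%N) enc_sum.
by rewrite -(big_mkord xpredT (fun i => nth 0 a i * N ^ i)%N) size_tuple.
Qed.

Theorem mainTheorem9 (F : fieldType) (HF : infinite_type F) (n : nat)
    (s : seq (n.-tuple nat * n.-tuple nat))
    (c : n.-tuple nat * n.-tuple nat -> F) :
  uniq s ->
  (forall (y : 'I_n -> 'M[F]_3) (z1 z2 : 'M[F]_3),
      (forall i, homog 0 (y i)) -> homog 1 z1 -> homog 1 z2 ->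
      \sum_(p <- s) c p *: comm_eval y z1 z2 p = 0) ->
  forall p, p \in s -> c p = 0.
Proof.
move=> us H p0 p0s.
pose dig (p : n.-tuple nat * n.-tuple nat) := (tval p.1 ++ tval p.2).
pose N := (\sum_(p <- s) sumn (dig p)).+1.
pose E p := enc N (dig p).
have N0 : (0 < N)%N by [].
have dig_bnd : forall p, p \in s -> all (fun d => d < N)%N (dig p).
  move=> p ps; apply/allP => x xd.
rewrite /N ltnS; apply: (leq_trans (mem_le_sumn _ _ xd)).
  by rewrite (big_rem p ps) /= leq_addr.
have Einj : {in s &, injective E}.
  move=> p q ps qs /(enc_inj N0 _ (dig_bnd p ps) (dig_bnd q qs)).
  rewrite /dig !size_cat !size_tuple => /(_ erefl) /eqP.
  rewrite eqseq_cat ?size_tuple // => /andP[/eqP h1 /eqP h2].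
  by case: p q {ps qs} h1 h2 => [a b] [a' b'] /= /val_inj -> /val_inj ->.
have Ev : forall t : F, \sum_(p <- s) c p * t ^+ E p = 0.
  move=> t.
  pose y := fun i : 'I_n => @dg F 0 (t ^+ (N ^ i)) (t ^+ (N ^ n * N ^ i)).
  have Hy : forall i, homog 0 (y i).
    move=> k i j; rewrite mxE; case: (i =P j) => [-> _|_]; first by rewrite leqnn subnn.
    by rewrite eqxx.
  have Hz1 : homog 1 (delta_mx o0 o1 : 'M[F]_3).
    move=> i j; rewrite mxE; case: i => [[|[|[|?]]] ?]; case: j => [[|[|[|?]]] ?]; by rewrite //= ?eqxx.
  have Hz2 : homog 1 (delta_mx o1 o2 : 'M[F]_3).
    move=> i j; rewrite mxE; case: i => [[|[|[|?]]] ?]; case: j => [[|[|[|?]]] ?]; by rewrite //= ?eqxx.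
  have := congr1 (fun M : 'M[F]_3 => M o0 o2) (H y _ _ Hy Hz1 Hz2).
  rewrite summxE mxE => Heq; apply: (etrans _ Heq).
  apply: eq_bigr => p _.
  rewrite /comm_eval -[delta_mx o0 o1]scale1r.
  rewrite (@br_ys_E F n y _ (fun i => t ^+ (N ^ i) - 0)); last by move=> i k; exact: lie01.
  rewrite lie0112.
  rewrite (@br_ys_E F n y _ (fun i => t ^+ (N ^ n * N ^ i) - 0)); last by move=> i k; exact: lie02.
  rewrite !mxE /= mulr1 mul1r; congr (_ * _).
  under eq_bigr do rewrite subr0 -exprM.
  under [X in _ = _ * X]eq_bigr do rewrite subr0 -exprM.
  rewrite !prodrXr -exprD /E /dig enc_cat size_tuple !enc_tuple; congr (_ ^+ _).
  rewrite big_distrr /=; congr (_ + _)%N; apply: eq_bigr => i _; lia.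
pose P : {poly F} := \sum_(p <- s) c p *: 'X^(E p).
have P0 : P = 0.
  apply/eqP/negPn/negP => nP.
  have [r [ur sr]] := @infinite_seq F HF (size P).
  have Hall : all (root P) r.
    apply/allP => t _; rewrite /root /P horner_sum; apply/eqP; apply: (etrans _ (Ev t)).
    by apply: eq_bigr => p _; rewrite hornerZ hornerXn.
  by have := max_poly_roots nP Hall ur; rewrite sr ltnn.
have := congr1 (fun q : {poly F} => q`_(E p0)) P0.
rewrite coef0 coef_sum (bigD1_seq p0) //= coefZ coefXn eqxx mulr1 big1_seq ?addr0 //.
move=> p /andP[pp0 ps]; rewrite coefZ coefXn.
have : E p != E p0 by apply: contra pp0 => /eqP /(Einj _ _ ps p0s) ->.
by rewrite eq_sym => /negbTE ->; rewrite mulr0.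
Qed.
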